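(* Suppose $L=cW$ with $c\in\mathbb{C}\setminus\{0\}$ and $W\in\mathbb{C}^{p\times p}$ unitary. Let $\mathcal A\in\mathbb{C}_p^{I_1\times\cdots\times I_N}$. For each $n$ let $\mathcal A_{(n)}=\mathcal U_n*\Sigma_n*\mathcal V_n^H$ be the t-SVD of the mode-$n$ unfolding, let $R_n$ be the t-rank of $\mathcal A_{(n)}$, let $\sigma^{(n)}_1,\dots,\sigma^{(n)}_{R_n}$ be the Frobenius norms of the nonzero diagonal tubal scalars $\Sigma_n(i,i)$, and fix integers $1\le I_n'\le R_n$. Define $\widehat{\mathcal U}_1,\dots,\widehat{\mathcal U}_N$ recursively: $\widehat{\mathcal U}_n\in\mathbb{C}_p^{I_n\times I_n'}$ is formed by the first $I_n'$ columns of the left unitary factor of the t-SVD of the tubal matrix $\big(\mathcal A*_1\widehat{\mathcal U}_1^H\cdots*_{n-1}\widehat{\mathcal U}_{n-1}^H\big)_{(n)}$ (for $n=1$, of $\mathcal A_{(1)}$). Let $\widehat{\mathcal S}=\mathcal A*_1\widehat{\mathcal U}_1^H\cdots*_N\widehat{\mathcal U}_N^H$ and $\widehat{\mathcal A}=\widehat{\mathcal S}*_1\widehat{\mathcal U}_1\cdots*_N\widehat{\mathcal U}_N$. Then $$\|\mathcal A-\widehat{\mathcal A}\|\le\sqrt{\sum_{n=1}^N\sum_{i=I_n'+1}^{R_n}(\sigma^{(n)}_i)^2}\le\sqrt N\,\big\|\mathcal A-\mathcal S*_1\mathcal W_1\cdots*_N\mathcal W_N\big\|$$ for every $\mathcal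 S\in\mathbb{C}_p^{I_1'\times\cdots\times I_N'}$ and all $\mathcal W_n\in\mathbb{C}_p^{I_n\times I_n'}$ with $\mathcal W_n^H*\mathcal W_n=\mathcal I_{I_n'}$.
   Context: Fix an integer $p\ge1$ and an invertible linear map $L:\mathbb{C}^p\to\mathbb{C}^p$. A tubal scalar is an element of $\mathbb{C}_p:=\mathbb{C}^p$. The tensor-tensor product of tubal scalars is $\mathbf a*\mathbf b=L^{-1}(L(\mathbf a)\odot L(\mathbf b))$, where $\odot$ is the componentwise product. A tubal matrix $\mathcal A\in\mathbb{C}_p^{I\times J}$ is an $I\times J$ array of tubal scalars; its $k$-th frontal slice $\mathcal A^{(k)}$ has entries $\mathcal A(i,j)^{(k)}$, and $L(\mathcal A)$ is obtained by applying $L$ to every entry. $(\mathcal A*\mathcal B)(i,k)=\sum_j\mathcal A(i,j)*\mathcal B(j,k)$; equivalently $L(\mathcal A*\mathcal B)^{(k)}=L(\mathcal A)^{(k)}L(\mathcal B)^{(k)}$. The identity $\mathcal I_I$ has $L(\mathcal I_I)^{(k)}$ equal to the $I\times I$ identity matrix for all $k$. The Hermitian transpose is defined by $L(\mathcal A^H)^{(k)}=(L(\mathcal A)^{(k)})^H$; $\mathcal A\in\mathbb{C}_p^{I\times I}$ is unitary if $\mathcal A*\mathcal A^H=\mathcal A^H*\mathcal A=\mathcal I_I$. A t-SVD of $\mathcal A\in\mathbb{C}_p^{I\times J}$ is the factorization $\mathcal A=\mathcal U*\Sigma*\mathcal V^H$ obtained by taking, for each $k$, a matrix SVD $L(\mathcal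 A)^{(k)}=U_kS_kV_k^H$ (with $U_k,V_k$ unitary, $S_k$ rectangular diagonal with singular values in nonincreasing order) and defining $L(\mathcal U)^{(k)}=U_k$, $L(\Sigma)^{(k)}=S_k$, $L(\mathcal V)^{(k)}=V_k$; $\mathcal U$ is its left unitary factor. The t-rank is the number of nonzero tubal scalars $\Sigma(i,i)$. A tubal tensor $\mathcal A\in\mathbb{C}_p^{I_1\times\cdots\times I_N}$ is an $N$-way array of tubal scalars; its mode-$n$ unfolding $\mathcal A_{(n)}\in\mathbb{C}_p^{I_n\times\prod_{m\neq n}I_m}$ has $\mathcal A_{(n)}(i_n,j)=\mathcal A(i_1,\dots,i_N)$ with $j=1+\sum_{k\neq n}(i_k-1)\prod_{m<k,\,m\neq n}I_m$. The $n$-mode product is $(\mathcal A*_n\mathcal U)(i_1,\dots,i_{n-1},j,i_{n+1},\dots,i_N)=\sum_{i_n}\mathcal A(i_1,\dots,i_N)*\mathcal U(j,i_n)$; repeated products are evaluated left to right. $\|\cdot\|$ is the Frobenius norm (Euclidean norm of all complex entries of the underlying array). *)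

(* Defs.v *)
From mathcomp Require Import all_boot all_algebra.
From mathcomp Require Import complex.
From mathcomp Require Import reals.
Set Implicit Arguments. Unset Strict Implicit. Unset Printing Implicit Defensive.
Import GRing.Theory Num.Theory.
Local Open Scope ring_scope.

Section TubalDefs.
Variables (C : numClosedFieldType) (p : nat).

(* A tubal scalar is a column vector in C^p.  Its transform is L(a) = L *m a. *)
Definition tubal := 'cV[C]_p.

(* Tubal matrices and tubal tensors are represented by nat-indexed functions;
   their dimensions are passed explicitly wherever they matter. Modes are
   numbered 0 .. N-1, indices 0 .. I-1. *)
Definition tmat := nat -> nat -> tubal.
Definition ttensor := (nat -> nat) -> tubal.

Definition tprod (L : 'M[C]_p) (a b : tubal) : tubal :=
  invmx L *m \col_k ((L *m a) k 0 * (L *m b) k 0).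

Definition therm (L : 'M[C]_p) (a : tubal) : tubal :=
  invmx L *m map_mx Num.conj (L *m a).

Definition tH (L : 'M[C]_p) (U : tmat) : tmat := fun j i => therm L (U i j).

Definition tmul (L : 'M[C]_p) (K : nat) (A B : tmat) : tmat :=
  fun i j => \sum_(t < K) tprod L (A i t) (B t j).

Definition tid (L : 'M[C]_p) : tmat :=
  fun i j => invmx L *m (const_mx (if i == j then 1 else 0)).

Definition tslice (L : 'M[C]_p) (I J : nat) (A : tmat) (k : 'I_p) : 'M[C]_(I, J) :=
  \matrix_(i < I, j < J) (L *m A i j) k 0.

End TubalDefs.

Definition mxH (C : numClosedFieldType) (m n : nat) (M : 'M[C]_(m, n)) : 'M[C]_(n, m) :=
  (map_mx Num.conj M)^T.

Definition rdiag_sorted (C : numClosedFieldType) (m n : nat) (S : 'M[C]_(m, n)) : Prop :=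
  [/\ forall (i : 'I_m) (j : 'I_n), (i : nat) != j -> S i j = 0,
      forall (i : 'I_m) (j : 'I_n), (i : nat) = j -> 0 <= S i j
    & forall (i1 i2 : 'I_m) (j1 j2 : 'I_n), (i1 : nat) = j1 -> (i2 : nat) = j2 ->
        (i1 <= i2)%N -> S i2 j2 <= S i1 j1].

Definition is_tSVD (C : numClosedFieldType) (p : nat) (L : 'M[C]_p) (I J : nat)
  (A U S V : tmat C p) : Prop :=
  forall k : 'I_p,
    [/\ tslice L I I U k \is unitarymx,
        tslice L J J V k \is unitarymx,
        rdiag_sorted (tslice L I J S k)
      & tslice L I J A k = tslice L I I U k *m tslice L I J S k *m mxH (tslice L J J V k)].

Definition trank (C : numClosedFieldType) (p : nat) (I J : nat) (S : tmat C p) : nat :=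
  count (fun i => S i i != 0) (iota 0 (minn I J)).

Definition tnorm (C : numClosedFieldType) (p : nat) (a : tubal C p) : C :=
  sqrtC (\sum_(k < p) `|a k 0| ^+ 2).

Definition upd (i : nat -> nat) (n t : nat) : nat -> nat :=
  fun m => if m == n then t else i m.

Fixpoint tsum (C : numClosedFieldType) (n : nat) (d : nat -> nat)
  (F : (nat -> nat) -> C) (acc : nat -> nat) : C :=
  match n with
  | 0 => F acc
  | m.+1 => \sum_(t < d m) tsum m d F (upd acc m t)
  end.

Definition tnormT (C : numClosedFieldType) (p N : nat) (d : nat -> nat)
  (X : ttensor C p) : C :=
  sqrtC (tsum N d (fun i => \sum_(k < p) `|X i k 0| ^+ 2) (fun _ => 0%N)).

(* mode-n unfolding:  A_(n)(i_n, j) = A(i_1..i_N), with (0-based)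
   j = sum_{k <> n} i_k * prod_{m < k, m <> n} I_m *)
Definition colw (d : nat -> nat) (n k : nat) : nat := (\prod_(m < k | (m : nat) != n) d m)%N.
Definition ncols (N : nat) (d : nat -> nat) (n : nat) : nat := (\prod_(m < N | (m : nat) != n) d m)%N.
Definition decode (N : nat) (d : nat -> nat) (n r c : nat) : nat -> nat :=
  fun k => if (k < N)%N then (if k == n then r else (c %/ colw d n k) %% d k)%N else 0%N.
Definition unfold (C : numClosedFieldType) (p N : nat) (d : nat -> nat) (n : nat)
  (A : ttensor C p) : tmat C p :=
  fun r c => A (decode N d n r c).

Definition mprod (C : numClosedFieldType) (p : nat) (L : 'M[C]_p) (dn n : nat)
  (A : ttensor C p) (U : tmat C p) : ttensor C p :=
  fun i => \sum_(t < dn) tprod L (A (upd i n t)) (U (i n) t).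

Fixpoint hprod (C : numClosedFieldType) (p : nat) (L : 'M[C]_p) (d : nat -> nat)
  (A : ttensor C p) (U : nat -> tmat C p) (n : nat) : ttensor C p :=
  match n with
  | 0 => A
  | m.+1 => mprod L (d m) m (hprod L d A U m) (tH L (U m))
  end.

Fixpoint rprod (C : numClosedFieldType) (p : nat) (L : 'M[C]_p) (d' : nat -> nat)
  (S : ttensor C p) (W : nat -> tmat C p) (n : nat) : ttensor C p :=
  match n with
  | 0 => S
  | m.+1 => mprod L (d' m) m (rprod L d' S W m) (W m)
  end.

(* dimensions after the first n products by U_m^H (m < n) *)
Definition shp (d d' : nat -> nat) (n : nat) : nat -> nat :=
  fun m => if (m < n)%N then d' m else d m.

(* Main.v *)
Require Import Defs.
From mathcomp Require Import all_boot all_order all_algebra.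
From mathcomp Require Import complex.
From mathcomp Require Import reals.
From mathcomp Require Import ring.
Set Implicit Arguments. Unset Strict Implicit. Unset Printing Implicit Defensive.
Import Order.TTheory GRing.Theory Num.Theory.
Local Open Scope ring_scope.
Section Mat.
Variable C : numClosedFieldType.

Lemma mxH_mul m n k (A : 'M[C]_(m, n)) (B : 'M[C]_(n, k)) :
  mxH (A *m B) = mxH B *m mxH A.
Proof. by rewrite /mxH map_mxM trmx_mul. Qed.

Lemma mxHK m n (A : 'M[C]_(m, n)) : mxH (mxH A) = A.
Proof. by apply/matrixP => i j; rewrite !mxE conjCK. Qed.

Lemma mxHD m n (A B : 'M[C]_(m, n)) : mxH (A + B) = mxH A + mxH B.
Proof. by apply/matrixP => i j; rewrite !mxE rmorphD. Qed.

Lemma mxHN m n (A : 'M[C]_(m, n)) : mxH (- A) = - mxH A.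
Proof. by apply/matrixP => i j; rewrite !mxE rmorphN. Qed.

Lemma mxHB m n (A B : 'M[C]_(m, n)) : mxH (A - B) = mxH A - mxH B.
Proof. by rewrite mxHD mxHN. Qed.

Lemma mxH0 m n : mxH (0 : 'M[C]_(m, n)) = 0.
Proof. by apply/matrixP => i j; rewrite !mxE rmorph0. Qed.

Lemma mxH1 n : mxH (1%:M : 'M[C]_n) = 1%:M.
Proof. by apply/matrixP => i j; rewrite !mxE rmorph_nat eq_sym. Qed.

Lemma unitary_mxH n (U : 'M[C]_(n, n)) : U \is unitarymx ->
  U *m mxH U = 1%:M /\ mxH U *m U = 1%:M.
Proof.
move=> /unitarymxP hU.
have e : U *m mxH U = 1%:M.
  by rewrite -hU; congr (_ *m _); apply/matrixP => i j; rewrite !mxE.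
by split => //; apply: mulmx1C.
Qed.

Definition fro m n (X : 'M[C]_(m, n)) : C := \tr (X *m mxH X).

Lemma froE m n (X : 'M[C]_(m, n)) : fro X = \sum_i \sum_j `|X i j| ^+ 2.
Proof.
rewrite /fro /mxtrace; apply: eq_bigr => i _; rewrite mxE; apply: eq_bigr => j _.
by rewrite !mxE normCK.
Qed.

Lemma fro_ge0 m n (X : 'M[C]_(m, n)) : 0 <= fro X.
Proof. by rewrite froE; apply: sumr_ge0 => i _; apply: sumr_ge0 => j _; exact: exprn_ge0. Qed.

Lemma fro_mxH m n (X : 'M[C]_(m, n)) : fro (mxH X) = fro X.
Proof. by rewrite /fro mxHK mxtrace_mulC. Qed.

Lemma fro_isoL m n k (Q : 'M[C]_(m, k)) (X : 'M[C]_(k, n)) :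
  mxH Q *m Q = 1%:M -> fro (Q *m X) = fro X.
Proof.
move=> hQ; rewrite /fro mxH_mul mulmxA mxtrace_mulC !mulmxA hQ mul1mx.
by rewrite mxtrace_mulC.
Qed.

Lemma fro_isoR m n k (V : 'M[C]_(k, n)) (X : 'M[C]_(m, n)) :
  mxH V *m V = 1%:M -> fro (X *m mxH V) = fro X.
Proof.
move=> hV; rewrite -fro_mxH mxH_mul mxHK fro_isoL ?fro_mxH //.
Qed.

Lemma froD m n (X Y : 'M[C]_(m, n)) :
  fro (X + Y) = fro X + fro Y + (\tr (X *m mxH Y) + \tr (Y *m mxH X)).
Proof.
rewrite /fro mxHD mulmxDl !mulmxDr !mxtraceD.
ring.
Qed.

Lemma fro_pyth m n k (Q : 'M[C]_(m, k)) (X : 'M[C]_(m, n)) (G : 'M[C]_(k, n)) :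
  mxH Q *m Q = 1%:M -> mxH Q *m X = 0 -> fro (X + Q *m G) = fro X + fro G.
Proof.
move=> hQ hX; rewrite froD fro_isoL //.
rewrite mxH_mul mulmxA mxtrace_mulC mulmxA hX mul0mx mxtrace0 add0r.
have hX' : mxH X *m Q = 0 by rewrite -[Q]mxHK -mxH_mul hX mxH0.
by rewrite -mulmxA mxtrace_mulC -mulmxA hX' mulmx0 mxtrace0 addr0.
Qed.

End Mat.

Section Contr.
Variable C : numClosedFieldType.
Lemma fro_coiso m n k (Q : 'M[C]_(m, k)) (X : 'M[C]_(m, n)) :
  mxH Q *m Q = 1%:M -> fro (mxH Q *m X) <= fro X.
Proof.
move=> hQ.
have hX : mxH Q *m (X - Q *m mxH Q *m X) = 0.
  by rewrite mulmxBr !mulmxA hQ mul1mx subrr.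
have -> : fro X = fro ((X - Q *m mxH Q *m X) + Q *m (mxH Q *m X)).
  by rewrite mulmxA subrK.
by rewrite fro_pyth // lerDr fro_ge0.
Qed.
End Contr.
Section SVD.
Variable C : numClosedFieldType.

Lemma tr_diag_mul n (s : 'rV[C]_n) (P : 'M[C]_n) :
  \tr (diag_mx s *m P) = \sum_i s 0 i * P i i.
Proof. by apply: eq_bigr => i _; rewrite mul_diag_mx mxE. Qed.

Lemma coiso_diag m r (Q : 'M[C]_(m, r)) (i : 'I_m) :
  mxH Q *m Q = 1%:M ->
  let P := Q *m mxH Q in 0 <= P i i /\ P i i <= 1.
Proof.
move=> hQ P.
have PE : forall a b, P a b = \sum_j Q a j * (Q b j)^*.
  by move=> a b; rewrite /P mxE; apply: eq_bigr => j _; rewrite !mxE.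
have Pii : P i i = \sum_j `|Q i j| ^+ 2.
  by rewrite PE; apply: eq_bigr => j _; rewrite normCK.
have P0 : 0 <= P i i by rewrite Pii; apply: sumr_ge0 => j _; exact: exprn_ge0.
split => //.
have PP : P *m mxH P = P.
  by rewrite /P mxH_mul mxHK mulmxA -(mulmxA Q) hQ mulmx1.
have : P i i = \sum_j `|P i j| ^+ 2.
  by rewrite -{1}PP mxE; apply: eq_bigr => j _; rewrite !mxE normCK.
rewrite (bigD1 i) //= => Pe.
have h2 : P i i ^+ 2 <= P i i.
  rewrite {2}Pe ger0_norm // lerDl; apply: sumr_ge0 => j _; exact: exprn_ge0.
have [->|nz] := eqVneq (P i i) 0; first exact: ler01.
have pos : 0 < P i i by rewrite lt0r nz P0.
by rewrite -(ler_pM2l pos) mulr1 -expr2.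
Qed.

Lemma coiso_tr m r (Q : 'M[C]_(m, r)) :
  mxH Q *m Q = 1%:M -> \sum_i (Q *m mxH Q) i i = r%:R.
Proof. by move=> hQ; rewrite -/(\tr _) mxtrace_mulC hQ mxtrace1. Qed.

Variables (m J : nat) (Y : 'M[C]_(m, J)) (U : 'M[C]_m) (S : 'M[C]_(m, J)) (V : 'M[C]_J).
Hypotheses (hU : U \is unitarymx) (hV : V \is unitarymx) (hS : rdiag_sorted S)
  (hY : Y = U *m S *m mxH V).

Definition sig (i : 'I_m) := (S *m mxH S) i i.

Lemma SSH_diag : S *m mxH S = diag_mx (\row_i sig i).
Proof.
apply/matrixP => a b; rewrite !mxE.
case: (boolP (a == b)) => [/eqP <-|nab].
  by rewrite mulr1n /sig mxE.
rewrite mulr0n; apply: big1 => j _.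
case: hS => hoff _ _; rewrite !mxE.
have [e|ne] := eqVneq (a : nat) (j : nat).
  rewrite (hoff b j) ?rmorph0 ?mulr0 //.
  by apply: contra nab => /eqP e2; apply/eqP/val_inj; rewrite /= e e2.
by rewrite (hoff a j) ?mul0r.
Qed.

Lemma sigE (i : 'I_m) : sig i = \sum_j `|S i j| ^+ 2.
Proof. by rewrite /sig mxE; apply: eq_bigr => j _; rewrite !mxE normCK. Qed.

Lemma sig_ge0 i : 0 <= sig i.
Proof. by rewrite sigE; apply: sumr_ge0 => j _; exact: exprn_ge0. Qed.

Lemma sig_single (i : 'I_m) (j : 'I_J) : (i : nat) = j -> sig i = `|S i j| ^+ 2.
Proof.
move=> e; rewrite sigE (bigD1 j) //= big1 ?addr0 // => j' nj.
case: hS => hoff _ _; rewrite hoff ?normr0 ?expr0n //.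
by rewrite e; apply: contra nj => /eqP/val_inj ->.
Qed.

Lemma sig_out (i : 'I_m) : (J <= i)%N -> sig i = 0.
Proof.
move=> hi; rewrite sigE big1 // => j _.
case: hS => hoff _ _; rewrite hoff ?normr0 ?expr0n //.
by rewrite neq_ltn (leq_trans (ltn_ord j) hi) orbT.
Qed.

Lemma sig_sorted (i1 i2 : 'I_m) : (i1 <= i2)%N -> sig i2 <= sig i1.
Proof.
move=> h12.
have [hJ|hJ] := leqP J i2; first by rewrite sig_out // sig_ge0.
have h1 : (i1 < J)%N by exact: leq_ltn_trans h12 hJ.
rewrite (sig_single (j := Ordinal hJ)) // (sig_single (j := Ordinal h1)) //.
case: hS => _ hpos hsort.
have a0 := hpos i2 (Ordinal hJ) erefl.
have b0 := hpos i1 (Ordinal h1) erefl.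
have ab := hsort i1 i2 (Ordinal h1) (Ordinal hJ) erefl erefl h12.
rewrite !ger0_norm //; exact: lerXn2r.
Qed.

Lemma fro_proj_gen r (Q : 'M[C]_(m, r)) : mxH Q *m Q = 1%:M ->
  fro (Y - Q *m mxH Q *m Y) =
  \sum_i sig i * (1 - ((mxH U *m Q) *m mxH (mxH U *m Q)) i i).
Proof.
move=> hQ.
have [UU1 UU2] := unitary_mxH hU.
have [VV1 VV2] := unitary_mxH hV.
have hX : mxH Q *m (Y - Q *m mxH Q *m Y) = 0.
  by rewrite mulmxBr !mulmxA hQ mul1mx subrr.
have eY : Y = (Y - Q *m mxH Q *m Y) + Q *m (mxH Q *m Y) by rewrite mulmxA subrK.
have f1 : fro Y = fro (Y - Q *m mxH Q *m Y) + fro (mxH Q *m Y).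
  by rewrite {1}eY fro_pyth.
have fY : fro Y = \sum_i sig i.
  rewrite hY fro_isoR // fro_isoL // /fro SSH_diag /mxtrace.
have fQY : fro (mxH Q *m Y) = \sum_i sig i * ((mxH U *m Q) *m mxH (mxH U *m Q)) i i.
  rewrite hY !mulmxA fro_isoR // /fro mxH_mul -!mulmxA.
  rewrite (mulmxA S) SSH_diag mulmxA mxtrace_mulC -mulmxA tr_diag_mul.
  rewrite !mxH_mul !mxHK !mulmxA.
  by under eq_bigr do rewrite mxE.
rewrite (_ : fro _ = fro Y - fro (mxH Q *m Y)); last by rewrite f1 addrK.
rewrite fY fQY -sumrB; apply: eq_bigr => i _; by rewrite mulrBr mulr1.
Qed.

End SVD.
Section Rearr.
Variable C : numClosedFieldType.

Lemma sum_ind_min m r : \sum_(i < m) ((i < r)%N%:R : C) = (minn r m)%:R.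
Proof.
elim: m => [|m IH]; first by rewrite big_ord0 minn0.
rewrite big_ord_recr /= IH.
case: (ltnP m r) => h.
  by rewrite (minn_idPr h) -natrD addn1.
by rewrite addr0 (minn_idPl (leq_trans h (leqnSn m))).
Qed.

Lemma sum_ind_lt m r : (r <= m)%N -> \sum_(i < m) ((i < r)%N%:R : C) = r%:R.
Proof. by move=> hr; rewrite sum_ind_min (minn_idPl hr). Qed.

Lemma rearrange m r (s w : 'I_m -> C) :
  (r <= m)%N ->
  (forall i, 0 <= s i) -> (forall i j : 'I_m, (i <= j)%N -> s j <= s i) ->
  (forall i, 0 <= w i /\ w i <= 1) -> \sum_i w i = r%:R ->
  \sum_(i : 'I_m | (r <= i)%N) s i <= \sum_i s i * (1 - w i).
Proof.
move=> hr s0 sdec hw hsum.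
rewrite -subr_ge0.
have -> : \sum_i s i * (1 - w i) - \sum_(i : 'I_m | (r <= i)%N) s i =
          \sum_(i < m) s i * ((i < r)%N%:R - w i).
  pose P := fun i : 'I_m => (r <= i)%N.
  have e1 : \sum_(i < m | P i) s i * ((i < r)%N%:R - w i) =
            \sum_(i < m | P i) s i * (1 - w i) - \sum_(i < m | P i) s i.
    rewrite -sumrB; apply: eq_bigr => i hi; rewrite ltnNge (_ : (r <= i)%N) /=; [ring|exact: hi].
  have e2 : \sum_(i < m | ~~ P i) s i * ((i < r)%N%:R - w i) =
            \sum_(i < m | ~~ P i) s i * (1 - w i).
    by apply: eq_bigr => i; rewrite /P ltnNge => /negbTE ->.
  rewrite [RHS](bigID P) e1 e2 (bigID P) /=; ring.
have [hrm|hrm] := eqVneq r m.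
  apply: sumr_ge0 => i _; rewrite hrm ltn_ord mulr_ge0 // subr_ge0; exact: (hw i).2.
have hrm' : (r < m)%N by rewrite ltn_neqAle hrm hr.
pose t := s (Ordinal hrm').
apply: (@le_trans _ _ (\sum_(i < m) t * ((i < r)%N%:R - w i))).
  by rewrite -mulr_sumr sumrB sum_ind_lt // hsum subrr mulr0.
apply: ler_sum => i _.
case: (ltnP i r) => hi /=.
  rewrite ler_wpM2r // ?subr_ge0 ?(hw i).2 //; apply: sdec; exact: ltnW.
rewrite !sub0r !mulrN lerN2 ler_wpM2r ?(hw i).1 //; exact: sdec.
Qed.

End Rearr.

Section SVD2.
Variable C : numClosedFieldType.
Variables (m J : nat) (Y : 'M[C]_(m, J)) (U : 'M[C]_m) (S : 'M[C]_(m, J)) (V : 'M[C]_J).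
Hypotheses (hU : U \is unitarymx) (hV : V \is unitarymx) (hS : rdiag_sorted S)
  (hY : Y = U *m S *m mxH V).

Definition Er m r : 'M[C]_(m, r) := \matrix_(i, j) ((i : nat) == j)%:R.

Lemma Er_iso r : (r <= m)%N -> mxH (Er m r) *m Er m r = 1%:M.
Proof.
move=> hr; apply/matrixP => a b; rewrite !mxE.
have ha : (a < m)%N by exact: leq_trans (ltn_ord a) hr.
rewrite (bigD1 (Ordinal ha)) //= big1.
  rewrite !mxE /= eqxx rmorph1 mul1r addr0. done.
move=> i /negP hi; rewrite !mxE.
case: (boolP ((i : nat) == a)) => [/eqP e|]; last by rewrite rmorph0 mul0r.
by exfalso; apply: hi; apply/eqP/val_inj.
Qed.

Lemma Er_proj_diag r (i : 'I_m) : (Er m r *m mxH (Er m r)) i i = (i < r)%N%:R.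
Proof.
rewrite mxE; case: (ltnP i r) => hi.
  rewrite (bigD1 (Ordinal hi)) //= big1 ?addr0; first by rewrite !mxE /= eqxx rmorph_nat -natrM.
  move=> j /negP hj; rewrite !mxE; case: (boolP ((i : nat) == j)) => [/eqP e|]; last by rewrite mul0r.
  by exfalso; apply: hj; apply/eqP/val_inj.
rewrite big1 // => j _; rewrite !mxE; case: (boolP ((i : nat) == j)) => [/eqP e|]; last by rewrite mul0r.
by move: (ltn_ord j); rewrite -e ltnNge hi.
Qed.

Lemma tail_exact r : (r <= m)%N ->
  fro (Y - (U *m Er m r) *m mxH (U *m Er m r) *m Y) = \sum_(i : 'I_m | (r <= i)%N) sig S i.
Proof.
move=> hr.
have [UU1 UU2] := unitary_mxH hU.
have hQ : mxH (U *m Er m r) *m (U *m Er m r) = 1%:M.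
  by rewrite mxH_mul mulmxA -(mulmxA _ _ U) UU2 mulmx1 Er_iso.
rewrite (fro_proj_gen hU hV hS hY hQ) mulmxA UU2 mul1mx [RHS]big_mkcond /=.
apply: eq_bigr => i _; rewrite Er_proj_diag; case: (ltnP i r) => h /=.
  by rewrite subrr mulr0.
by rewrite subr0 mulr1.
Qed.

Lemma tail_min r (Q : 'M[C]_(m, r)) (M : 'M[C]_(r, J)) : (r <= m)%N ->
  mxH Q *m Q = 1%:M ->
  \sum_(i : 'I_m | (r <= i)%N) sig S i <= fro (Y - Q *m M).
Proof.
move=> hr hQ.
have [UU1 UU2] := unitary_mxH hU.
have hX : mxH Q *m (Y - Q *m mxH Q *m Y) = 0.
  by rewrite mulmxBr !mulmxA hQ mul1mx subrr.
have -> : Y - Q *m M = (Y - Q *m mxH Q *m Y) + Q *m (mxH Q *m Y - M).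
  by rewrite mulmxBr !mulmxA addrA subrK.
rewrite fro_pyth // (fro_proj_gen hU hV hS hY hQ).
rewrite -[X in X <= _]addr0; apply: lerD; last exact: fro_ge0.
apply: rearrange => //.
- exact: sig_ge0.
- exact: sig_sorted.
- move=> i; apply: coiso_diag.
  by rewrite mxH_mul mxHK mulmxA -(mulmxA _ U) UU1 mulmx1.
- apply: coiso_tr.
  by rewrite mxH_mul mxHK mulmxA -(mulmxA _ U) UU1 mulmx1.
Qed.

End SVD2.
From Stdlib Require Import FunctionalExtensionality.

Lemma upd_at (i : nat -> nat) n t : upd i n t n = t.
Proof. by rewrite /upd eqxx. Qed.

Lemma upd_ne (i : nat -> nat) n t k : k != n -> upd i n t k = i k.
Proof. by rewrite /upd => /negbTE ->. Qed.

Lemma upd_same (i : nat -> nat) n t t' : upd (upd i n t) n t' = upd i n t'.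
Proof. by apply: functional_extensionality => k; rewrite /upd; case: (k == n). Qed.

Lemma upd_comm (i : nat -> nat) m n a b : m != n ->
  upd (upd i m a) n b = upd (upd i n b) m a.
Proof.
move=> hmn; apply: functional_extensionality => k; rewrite /upd.
case: (boolP (k == n)) => [/eqP ->|]; last by [].
by rewrite eq_sym (negbTE hmn).
Qed.

Lemma upd_id (i : nat -> nat) n : upd i n (i n) = i.
Proof. by apply: functional_extensionality => k; rewrite /upd; case: eqP => [->|]. Qed.

Section TS.
Variable C : numClosedFieldType.

Fixpoint tsumS (M : nat) (d : nat -> nat) (n : nat) (F : (nat -> nat) -> C)
  (acc : nat -> nat) : C :=
  match M with
  | 0 => F acc
  | M'.+1 => if M' == n then tsumS M' d n F acc
             else \sum_(t < d M') tsumS M' d n F (upd acc M' t)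
  end.

Definition mixS (M : nat) (d : nat -> nat) (n : nat) (acc : nat -> nat) (c : nat) :=
  fun k => if (k < M)%N then (if k == n then acc k else (c %/ colw d n k) %% d k)%N
           else acc k.

Lemma ncolsS M d n : ncols M.+1 d n = (ncols M d n * (if M == n then 1 else d M))%N.
Proof.
rewrite /ncols big_mkcond big_ord_recr /= -big_mkcond /=.
by case: (M == n); rewrite /= ?muln1.
Qed.

Lemma colw_ncols d n k : colw d n k = ncols k d n.
Proof. by []. Qed.

Lemma dvd_colw M d n k : (k < M)%N -> k != n -> (colw d n k * d k %| ncols M d n)%N.
Proof.
elim: M => [//|M IH] hk hkn.
rewrite ncolsS; case: (ltngtP k M) => h.
- by apply: dvdn_mulr; apply: IH.
- by move: hk; rewrite ltnS leqNgt h.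
- by subst k; rewrite (negbTE hkn) colw_ncols.
Qed.

Lemma sum_split_mul (a b : nat) (G : nat -> C) :
  \sum_(c < a * b) G c = \sum_(t < b) \sum_(c0 < a) G (c0 + a * t)%N.
Proof.
elim: b => [|b IH]; first by rewrite muln0 !big_ord0.
rewrite mulnS addnC big_split_ord /= IH big_ord_recr /=; congr (_ + _).
by apply: eq_bigr => i _; rewrite addnC.
Qed.

Lemma claimA M d n F acc :
  \sum_(c < ncols M d n) F (mixS M d n acc c) = tsumS M d n F acc.
Proof.
elim: M F acc => [|M IH] F acc.
  by rewrite /ncols big_ord0 big_ord1 /=.
rewrite ncolsS /=; case: (boolP (M == n)) => hMn.
  rewrite muln1 -IH; apply: eq_bigr => c _; congr F.
  apply: functional_extensionality => k; rewrite /mixS ltnS leq_eqVlt.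
  case: (boolP (k == M)) => [/eqP ->|] /=; last by [].
  by rewrite hMn ltnn.
rewrite (sum_split_mul _ _ (fun c => F (mixS M.+1 d n acc c))); apply: eq_bigr => t _; rewrite -IH.
apply: eq_bigr => c _; have hc := ltn_ord c; move: (nat_of_ord c) hc => {}c hc; congr F.
apply: functional_extensionality => k; rewrite /mixS ltnS leq_eqVlt.
have P0 : (0 < ncols M d n)%N by apply: leq_ltn_trans hc.
case: (boolP (k == M)) => [/eqP ->|hkM] /=.
  rewrite ltnn (negbTE hMn) upd_at colw_ncols.
  by rewrite addnC mulnC divnMDl // divn_small // addn0 modn_small.
case: (boolP (k < M)%N) => hk; last by rewrite upd_ne.
case: (boolP (k == n)) => hkn; first by rewrite upd_ne.
have /dvdnP [q hq] := dvd_colw d hk hkn.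
have cw0 : (0 < colw d n k)%N.
  by move: P0; rewrite hq; case: (colw d n k); rewrite ?muln0.
rewrite hq (_ : (q * (colw d n k * d k) * t) = (q * t * d k) * colw d n k)%N; last by ring.
by rewrite addnC divnMDl // modnMDl.
Qed.

Lemma claimC M d n (F : (nat -> nat) -> C) acc : (M <= n)%N -> tsumS M d n F acc = tsum M d F acc.
Proof.
elim: M acc => [//|M IH] acc hM /=.
rewrite (_ : (M == n) = false); last by apply/negbTE; rewrite neq_ltn hM.
by apply: eq_bigr => t _; rewrite IH // ltnW.
Qed.

Lemma claimB M d n (F : (nat -> nat) -> C) acc : (n < M)%N ->
  tsum M d F acc = \sum_(r < d n) tsumS M d n F (upd acc n r).
Proof.
elim: M acc => [//|M IH] acc hn /=.
case: (boolP (M == n)) => hMn.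
  move/eqP: hMn => hMn; subst n.
  by apply: eq_bigr => t _; rewrite claimC.
have hnM : (n < M)%N by move: hn; rewrite ltnS leq_eqVlt eq_sym (negbTE hMn).
rewrite (eq_bigr (fun t : 'I_(d M) => \sum_(r < d n) tsumS M d n F (upd (upd acc M t) n r))); last first.
  by move=> t _; rewrite IH.
rewrite exchange_big /=; apply: eq_bigr => r _; apply: eq_bigr => t _.
by rewrite upd_comm.
Qed.

Lemma decode_mixS N d n r c : (n < N)%N ->
  decode N d n r c = mixS N d n (upd (fun _ => 0%N) n r) c.
Proof.
move=> hn; apply: functional_extensionality => k; rewrite /decode /mixS /upd.
case: (boolP (k < N)%N) => hk; first by case: (k == n).
by case: (boolP (k == n)) => // /eqP e; move: hk; rewrite e hn.
Qed.

Lemma tsum_unfold N d n (F : (nat -> nat) -> C) : (n < N)%N ->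
  tsum N d F (fun _ => 0%N) =
  \sum_(r < d n) \sum_(c < ncols N d n) F (decode N d n r c).
Proof.
move=> hn; rewrite (claimB _ _ _ hn); apply: eq_bigr => r _.
rewrite -claimA; apply: eq_bigr => c _; by rewrite decode_mixS.
Qed.

Lemma tsum_ext M d (F G : (nat -> nat) -> C) acc : (forall i, F i = G i) -> tsum M d F acc = tsum M d G acc.
Proof. move=> h; elim: M acc => [|M IH] acc /=; first exact: h. by apply: eq_bigr => t _. Qed.

Lemma tsum_sum M d (I : finType) (F : I -> (nat -> nat) -> C) acc :
  tsum M d (fun i => \sum_k F k i) acc = \sum_k tsum M d (F k) acc.
Proof.
elim: M acc => [//|M IH] acc /=.
rewrite (eq_bigr (fun t : 'I_(d M) => \sum_k tsum M d (F k) (upd acc M t))); last by move=> t _; rewrite IH.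
by rewrite exchange_big.
Qed.

Lemma tsum_scale M d (a : C) F acc :
  tsum M d (fun i => a * F i) acc = a * tsum M d F acc.
Proof.
elim: M acc => [//|M IH] acc /=.
by rewrite mulr_sumr; apply: eq_bigr => t _; rewrite IH.
Qed.

End TS.
Section Tens.
Variable C : numClosedFieldType.
Notation tens := ((nat -> nat) -> C).

Definition smp (dn n : nat) (x : tens) (u : nat -> nat -> C) : tens :=
  fun i => \sum_(t < dn) x (upd i n t) * u (i n) t.

Definition ssq N (e : nat -> nat) (x : tens) : C :=
  tsum N e (fun i => `|x i| ^+ 2) (fun _ => 0%N).

Definition unf N e n m J (x : tens) : 'M[C]_(m, J) :=
  \matrix_(r < m, c < J) x (decode N e n r c).

Definition mat m k (u : nat -> nat -> C) : 'M[C]_(m, k) := \matrix_(i < m, j < k) u i j.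

Definition cjt (u : nat -> nat -> C) : nat -> nat -> C := fun j i => (u i j)^*.

Lemma mat_cjt m k u : mat k m (cjt u) = mxH (mat m k u).
Proof. by apply/matrixP => i j; rewrite !mxE. Qed.

Lemma ssq_unf N e n m J x : (n < N)%N -> m = e n -> J = ncols N e n ->
  ssq N e x = fro (unf N e n m J x).
Proof.
move=> hn -> ->; rewrite /ssq (@tsum_unfold _ N e n _ hn) froE.
by apply: eq_bigr => r _; apply: eq_bigr => c _; rewrite mxE.
Qed.

Lemma colw_ext e e' n k : (forall j, j != n -> e j = e' j) -> colw e n k = colw e' n k.
Proof. by move=> h; apply: eq_bigr => j hj; rewrite h. Qed.

Lemma ncols_ext N e e' n : (forall j, j != n -> e j = e' j) -> ncols N e n = ncols N e' n.
Proof. exact: colw_ext. Qed.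

Lemma decode_ext N e e' n r c : (forall j, j != n -> e j = e' j) ->
  decode N e n r c = decode N e' n r c.
Proof.
move=> h; apply: functional_extensionality => k; rewrite /decode.
case: (k < N)%N => //; case: (boolP (k == n)) => // hk.
by rewrite (colw_ext _ h) h.
Qed.

Lemma decode_at N e n r c : (n < N)%N -> decode N e n r c n = r.
Proof. by move=> hn; rewrite /decode hn eqxx. Qed.

Lemma decode_upd N e n r c t : (n < N)%N -> upd (decode N e n r c) n t = decode N e n t c.
Proof.
move=> hn; apply: functional_extensionality => k; rewrite /upd /decode.
by case: (boolP (k == n)) => [/eqP ->|]; rewrite ?hn ?eqxx.
Qed.

Lemma unf_smp N e e' n m J k x u : (n < N)%N -> (forall j, j != n -> e j = e' j) ->
  unf N e n m J (smp k n x u) = mat m k u *m unf N e' n k J x.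
Proof.
move=> hn he; apply/matrixP => r c; rewrite !mxE /smp.
apply: eq_bigr => t _; rewrite !mxE decode_at // decode_upd // mulrC.
by rewrite (decode_ext _ _ _ he).
Qed.

Lemma unfB N e n m J (x y : tens) :
  unf N e n m J (fun i => x i - y i) = unf N e n m J x - unf N e n m J y.
Proof. by apply/matrixP => r c; rewrite !mxE. Qed.

Lemma unfD N e n m J (x y : tens) :
  unf N e n m J (fun i => x i + y i) = unf N e n m J x + unf N e n m J y.
Proof. by apply/matrixP => r c; rewrite !mxE. Qed.

Lemma smpB dn n (x y : tens) u :
  smp dn n (fun i => x i - y i) u = (fun i => smp dn n x u i - smp dn n y u i).
Proof.
apply: functional_extensionality => i; rewrite /smp -sumrB.
by apply: eq_bigr => t _; rewrite mulrBl.
Qed.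

Lemma smp_comm dm m dn n (x : tens) A B : m != n ->
  smp dm m (smp dn n x B) A = smp dn n (smp dm m x A) B.
Proof.
move=> hmn; apply: functional_extensionality => i; rewrite /smp.
rewrite (eq_bigr (fun t : 'I_dm => \sum_(u < dn) x (upd (upd i n u) m t) * B (i n) u * A (i m) t)); last first.
  move=> t _; rewrite mulr_suml; apply: eq_bigr => u _.
  by rewrite upd_ne 1?eq_sym // upd_comm.
rewrite exchange_big /=; apply: eq_bigr => u _; rewrite mulr_suml; apply: eq_bigr => t _.
by rewrite upd_ne // -!mulrA (mulrC (B _ _)).
Qed.

Lemma tsum_dims M e e' (F : tens) acc : (forall k, e k = e' k) -> tsum M e F acc = tsum M e' F acc.
Proof.
move=> h; elim: M acc => [//|M IH] acc /=; rewrite h.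
by apply: eq_bigr => t _; rewrite IH.
Qed.

Lemma tsum0 M e (F : tens) acc : (forall i, F i = 0) -> tsum M e F acc = 0.
Proof.
move=> h; elim: M acc => [|M IH] acc /=; first exact: h.
by rewrite big1 // => t _; rewrite IH.
Qed.

Lemma ssq_ge0 N e x : 0 <= ssq N e x.
Proof.
rewrite /ssq; elim: N (fun _ : nat => 0%N) => [|M IH] acc /=; first exact: exprn_ge0.
by apply: sumr_ge0 => t _.
Qed.

End Tens.
Section Main.
Variable C : numClosedFieldType.
Notation tens := ((nat -> nat) -> C).

Fixpoint shpS (d : nat -> nat) (a : tens) (u : nat -> nat -> nat -> C) n : tens :=
  match n with 0 => a | m.+1 => smp (d m) m (shpS d a u m) (cjt (u m)) end.

Fixpoint srpS (d' : nat -> nat) (s : tens) (w : nat -> nat -> nat -> C) n : tens :=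
  match n with 0 => s | m.+1 => smp (d' m) m (srpS d' s w m) (w m) end.

Fixpoint srpK (d' : nat -> nat) (s : tens) (w : nat -> nat -> nat -> C) k n : tens :=
  match n with 0 => s | m.+1 => if m == k then srpK d' s w k m
                                else smp (d' m) m (srpK d' s w k m) (w m) end.

Lemma srpK_ge d' s w k n : (n <= k)%N -> srpK d' s w k n = srpS d' s w n.
Proof.
elim: n => [//|n IH] h /=.
by rewrite (_ : (n == k) = false) ?IH ?(ltnW h) //; apply/negbTE; rewrite neq_ltn h.
Qed.

Lemma srp_skip d' s w k N : (k < N)%N ->
  srpS d' s w N = smp (d' k) k (srpK d' s w k N) (w k).
Proof.
elim: N => [//|N IH] hk /=.
case: (boolP (N == k)) => [/eqP e|hNk].
  by subst; rewrite srpK_ge.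
have hk' : (k < N)%N by move: hk; rewrite ltnS leq_eqVlt eq_sym (negbTE hNk).
by rewrite IH // smp_comm.
Qed.

Definition toF m k (M : 'M[C]_(m, k)) : nat -> nat -> C :=
  fun i j => match insub i, insub j with Some i', Some j' => M i' j' | _, _ => 0 end.

Lemma mat_toF m k (M : 'M[C]_(m, k)) : mat m k (toF M) = M.
Proof.
apply/matrixP => i j; rewrite !mxE /toF.
by rewrite (insubT (fun x => x < m)%N (ltn_ord i)) (insubT (fun x => x < k)%N (ltn_ord j)) /=;
  congr (M _ _); apply: val_inj.
Qed.

Lemma unf_ext N e e' n m J (x : tens) : (forall j, j != n -> e j = e' j) ->
  unf N e n m J x = unf N e' n m J x.
Proof. by move=> h; apply/matrixP => r c; rewrite !mxE (decode_ext _ _ _ h). Qed.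

Lemma unf_smp' N e n m J k (x : tens) u : (n < N)%N ->
  unf N e n m J (smp k n x u) = mat m k u *m unf N e n k J x.
Proof. by move=> hn; apply: unf_smp. Qed.

Lemma shp_off d d' n j : j != n -> shp d d' n.+1 j = shp d d' n j.
Proof. by move=> h; rewrite /shp ltnS leq_eqVlt (negbTE h). Qed.

Lemma shp_at d d' n : shp d d' n n = d n.
Proof. by rewrite /shp ltnn. Qed.

Lemma shp_atS d d' n : shp d d' n.+1 n = d' n.
Proof. by rewrite /shp ltnSn. Qed.

Lemma shp0 d d' k : shp d d' 0 k = d k.
Proof. by rewrite /shp ltn0. Qed.

Lemma partB N d d' (a s : tens) (w : nat -> nat -> nat -> C) n
  (U : 'M[C]_(d n)) (S : 'M[C]_(d n, ncols N d n)) (V : 'M[C]_(ncols N d n)) :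
  (n < N)%N -> (d' n <= d n)%N -> U \is unitarymx -> V \is unitarymx -> rdiag_sorted S ->
  unf N d n (d n) (ncols N d n) a = U *m S *m mxH V ->
  mxH (mat (d n) (d' n) (w n)) *m mat (d n) (d' n) (w n) = 1%:M ->
  \sum_(i : 'I_(d n) | (d' n <= i)%N) sig S i <= ssq N d (fun x => a x - srpS d' s w N x).
Proof.
move=> hn hr hU hV hS hY hW.
rewrite (ssq_unf _ hn erefl erefl) unfB (srp_skip _ _ _ hn) unf_smp' //.
by apply: (tail_min hU hV hS hY).
Qed.

Variables (N : nat) (d d' : nat -> nat) (a : tens) (uh : nat -> nat -> nat -> C).
Notation sh := (shp d d').
Notation y := (shpS d a uh).

Fixpoint Rf k n (z : tens) : tens :=
  match k with 0 => z | k'.+1 => Rf k' n.+1 (smp (d' n) n z (uh n)) end.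

Lemma Rf_last k n z : Rf k.+1 n z = smp (d' (n + k)) (n + k) (Rf k n z) (uh (n + k)).
Proof.
elim: k n z => [|k IH] n z; first by rewrite addn0.
have -> : Rf k.+2 n z = Rf k.+1 n.+1 (smp (d' n) n z (uh n)) by [].
by rewrite IH addSnnS.
Qed.

Lemma srp_Rf s : srpS d' s uh N = Rf N 0 s.
Proof. by elim: N => [//|M IH]; rewrite Rf_last add0n -IH. Qed.

Lemma Rf_comm k j z dn n B : (n < j)%N -> Rf k j (smp dn n z B) = smp dn n (Rf k j z) B.
Proof.
elim: k j z => [//|k IH] j z hj /=.
rewrite smp_comm; last by rewrite neq_ltn hj orbT.
by rewrite IH // ltnW.
Qed.

Lemma shpS_comm j dn n z B : (j <= n)%N -> shpS d (smp dn n z B) uh j = smp dn n (shpS d z uh j) B.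
Proof.
elim: j => [//|j IH] hj /=.
rewrite IH ?(ltnW hj) // smp_comm //; by rewrite neq_ltn hj.
Qed.

Lemma shpSB j (x z : tens) : shpS d (fun i => x i - z i) uh j = (fun i => shpS d x uh j i - shpS d z uh j i).
Proof. by elim: j => [//|j IH] /=; rewrite IH smpB. Qed.

Hypothesis hiso : forall n, (n < N)%N -> mxH (mat (d n) (d' n) (uh n)) *m mat (d n) (d' n) (uh n) = 1%:M.

Lemma shpS_contr j x : (j <= N)%N -> ssq N (sh j) (shpS d x uh j) <= ssq N d x.
Proof.
elim: j => [|j IH] hj.
  by rewrite /ssq (tsum_dims _ _ _ (shp0 d d')).
apply: le_trans (IH (ltnW hj)).
have hoff : forall k, k != j -> sh j.+1 k = sh j k by move=> k; exact: shp_off.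
rewrite /= (ssq_unf _ hj (esym (shp_atS d d' j)) erefl) (unf_smp _ _ _ _ _ hj hoff) mat_cjt.
rewrite (ssq_unf _ hj (esym (shp_at d d' j)) (ncols_ext _ hoff)).
exact: fro_coiso (hiso hj).
Qed.


Definition en n : tens := fun i => y n i - smp (d' n) n (y n.+1) (uh n) i.

Lemma unf_e n : (n < N)%N ->
  unf N (sh n) n (d n) (ncols N (sh n) n) (en n) =
  unf N (sh n) n (d n) (ncols N (sh n) n) (y n) -
  mat (d n) (d' n) (uh n) *m mxH (mat (d n) (d' n) (uh n)) *m
  unf N (sh n) n (d n) (ncols N (sh n) n) (y n).
Proof.
move=> hn; rewrite /en unfB unf_smp' // [y n.+1]/= unf_smp' // mat_cjt mulmxA.
reflexivity.
Qed.

Variable Sg : forall n, 'M[C]_(d n, ncols N d n).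
Definition tailY m := \sum_(i : 'I_(d m) | (d' m <= i)%N) sig (Sg m) i.

Hypothesis HY : forall n, (n < N)%N -> exists (U : 'M[C]_(d n)) (V : 'M[C]_(ncols N d n)),
  [/\ U \is unitarymx, V \is unitarymx, rdiag_sorted (Sg n) &
      unf N d n (d n) (ncols N d n) a = U *m Sg n *m mxH V].
Hypothesis HZ : forall n, (n < N)%N -> exists (U : 'M[C]_(d n))
  (S : 'M[C]_(d n, ncols N (sh n) n)) (V : 'M[C]_(ncols N (sh n) n)),
  [/\ U \is unitarymx, V \is unitarymx, rdiag_sorted S,
      unf N (sh n) n (d n) (ncols N (sh n) n) (y n) = U *m S *m mxH V &
      mat (d n) (d' n) (uh n) = U *m Er C (d n) (d' n)].
Hypothesis Hr : forall n, (n < N)%N -> (d' n <= d n)%N.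

Lemma step1 n : (n < N)%N -> ssq N (sh n) (en n) <= tailY n.
Proof.
move=> hn.
have [U' [S' [V' [hU' hV' hS' hZ hQ]]]] := HZ hn.
have [U [V [hU hV hS hY]]] := HY hn.
have hr := Hr hn.
rewrite (ssq_unf _ hn (esym (shp_at d d' n)) erefl) unf_e // hQ.
rewrite (tail_exact hU' hV' hS' hZ hr).
pose Z := unf N (sh n) n (d n) (ncols N (sh n) n) (y n).
pose P := U *m Er C (d n) (d' n).
have [UU1 UU2] := unitary_mxH hU.
have hP : mxH P *m P = 1%:M.
  by rewrite /P mxH_mul mulmxA -(mulmxA _ _ U) UU2 mulmx1 Er_iso.
apply: le_trans (tail_min hU' hV' hS' hZ (mxH P *m Z) hr hP) _.
pose pf := toF P.
have eP : mat (d n) (d' n) pf = P by rewrite mat_toF.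
pose del : tens := fun i => a i - smp (d' n) n (smp (d n) n a (cjt pf)) pf i.
have e1 : Z - P *m (mxH P *m Z) = unf N (sh n) n (d n) (ncols N (sh n) n) (shpS d del uh n).
  rewrite /del shpSB !shpS_comm // unfB unf_smp' // unf_smp' // mat_cjt eP.
  by [].
rewrite -/Z e1 -(ssq_unf _ hn (esym (shp_at d d' n)) erefl).
apply: le_trans (shpS_contr _ (ltnW hn)) _.
rewrite (ssq_unf _ hn erefl erefl) /del unfB unf_smp' // unf_smp' // mat_cjt eP mulmxA.
by rewrite /P (tail_exact hU hV hS hY hr).
Qed.

Definition Fn n : tens := fun i => y n i - Rf (N - n) n (y N) i.

Lemma Fn_rec n : (n < N)%N -> Fn n = (fun i => en n i + smp (d' n) n (Fn n.+1) (uh n) i).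
Proof.
move=> hn; apply: functional_extensionality => i.
rewrite /Fn /en smpB.
have -> : (N - n = (N - n.+1).+1)%N by rewrite subnSK.
rewrite [Rf _.+1 _ _]/= Rf_comm //.
by rewrite addrA subrK.
Qed.

Lemma step2 k n : (n + k = N)%N -> ssq N (sh n) (Fn n) <= \sum_(n <= m < N) tailY m.
Proof.
elim: k n => [|k IH] n hk.
  rewrite addn0 in hk; subst n.
  rewrite big_geq // /ssq tsum0 // => i.
  by rewrite /Fn subnn /= subrr normr0 expr0n.
have hn : (n < N)%N by rewrite -hk -addSnnS leq_addr.
have hoff : forall j, j != n -> sh n.+1 j = sh n j by move=> j; exact: shp_off.
rewrite (big_ltn hn) Fn_rec // (ssq_unf _ hn (esym (shp_at d d' n)) erefl) unfD unf_smp' //.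
rewrite unf_e // fro_pyth ?hiso //; last first.
  by rewrite mulmxBr !mulmxA hiso // mul1mx subrr.
rewrite -unf_e //.
rewrite -(ssq_unf _ hn (esym (shp_at d d' n)) erefl).
apply: lerD; first exact: step1.
rewrite -(unf_ext _ _ _ _ hoff) -(ssq_unf _ hn (esym (shp_atS d d' n)) (esym (ncols_ext _ hoff))).
by apply: IH; rewrite -hk addSnnS.
Qed.

Lemma partA : ssq N d (fun i => a i - srpS d' (y N) uh N i) <= \sum_(n < N) tailY n.
Proof.
have := step2 (n := 0) (k := N) (add0n N).
rewrite /ssq (tsum_dims _ _ _ (shp0 d d')) big_mkord /Fn subn0 /=.
by rewrite srp_Rf.
Qed.

End Main.
Section Transf.
Variables (C : numClosedFieldType) (p : nat) (L W : 'M[C]_p) (c : C).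
Hypotheses (hc : c != 0) (hW : W \is unitarymx) (hL : L = c *: W).
Notation tens := ((nat -> nat) -> C).

Lemma L_unit : L \in unitmx.
Proof.
have [WW1 _] := unitary_mxH hW.
have h : L *m (c^-1 *: mxH W) = 1%:M.
  by rewrite hL -scalemxAr -scalemxAl WW1 scalerA mulVf // scale1r.
by have [] := mulmx1_unit h.
Qed.

Lemma L_inv (v : 'cV[C]_p) : L *m (invmx L *m v) = v.
Proof. by rewrite mulmxA mulmxV ?mul1mx // L_unit. Qed.

Lemma L_tprod (a b : tubal C p) k : (L *m tprod L a b) k 0 = (L *m a) k 0 * (L *m b) k 0.
Proof. by rewrite /tprod L_inv mxE. Qed.

Lemma L_therm (a : tubal C p) k : (L *m therm L a) k 0 = ((L *m a) k 0)^*.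
Proof. by rewrite /therm L_inv mxE. Qed.

Lemma L_sum (I : finType) (f : I -> tubal C p) k :
  (L *m \sum_t f t) k 0 = \sum_t (L *m f t) k 0.
Proof. by rewrite mulmx_sumr summxE. Qed.

Lemma L_sub (a b : tubal C p) k : (L *m (a - b)) k 0 = (L *m a) k 0 - (L *m b) k 0.
Proof. by rewrite mulmxBr !mxE. Qed.

Lemma L_tid i j k : (L *m tid L i j) k 0 = (i == j)%:R.
Proof. by rewrite /tid L_inv mxE; case: (i == j). Qed.

Definition sl k (X : ttensor C p) : tens := fun i => (L *m X i) k 0.
Definition slm k (U : tmat C p) : nat -> nat -> C := fun i j => (L *m U i j) k 0.

Lemma sl_mprod k dn n X U : sl k (mprod L dn n X U) = smp dn n (sl k X) (slm k U).
Proof.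
apply: functional_extensionality => i; rewrite /sl /mprod L_sum.
by apply: eq_bigr => t _; rewrite L_tprod.
Qed.

Lemma slm_tH k U : slm k (tH L U) = cjt (slm k U).
Proof.
apply: functional_extensionality => j; apply: functional_extensionality => i.
by rewrite /slm /tH L_therm.
Qed.

Lemma sl_hprod k d A U n : sl k (hprod L d A U n) = shpS d (sl k A) (fun m => slm k (U m)) n.
Proof. by elim: n => [//|n IH] /=; rewrite sl_mprod IH slm_tH. Qed.

Lemma sl_rprod k d' S W' n : sl k (rprod L d' S W' n) = srpS d' (sl k S) (fun m => slm k (W' m)) n.
Proof. by elim: n => [//|n IH] /=; rewrite sl_mprod IH. Qed.

Lemma tslice_unf I J N e n X k : tslice L I J (unfold N e n X) k = unf N e n I J (sl k X).
Proof. by apply/matrixP => i j; rewrite !mxE. Qed.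

Lemma sq_col (v : 'cV[C]_p) : \sum_k `|v k 0| ^+ 2 = (mxH v *m v) 0 0.
Proof. by rewrite mxE; apply: eq_bigr => k _; rewrite !mxE normCK mulrC. Qed.

Lemma L_norm (v : 'cV[C]_p) :
  \sum_k `|v k 0| ^+ 2 = `|c| ^- 2 * \sum_k `|(L *m v) k 0| ^+ 2.
Proof.
have [_ WW2] := unitary_mxH hW.
have e : mxH L *m L = (`|c| ^+ 2) *: 1%:M.
  rewrite hL (_ : mxH (c *: W) = c^* *: mxH W); last first.
    by apply/matrixP => i j; rewrite !mxE rmorphM.
  by rewrite -scalemxAl -scalemxAr WW2 scalerA normCK mulrC.
rewrite !sq_col mxH_mul mulmxA -(mulmxA _ _ L) e -scalemxAr mulmx1 -scalemxAl mxE.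
rewrite [X in _ * X]mxE mulrA mulVf ?mul1r; first by rewrite mxE.
by rewrite expf_neq0 // normr_eq0.
Qed.

End Transf.
Section Bound.
Variables (C : numClosedFieldType) (p : nat) (L W : 'M[C]_p) (c : C).
Hypotheses (hc : c != 0) (hW : W \is unitarymx) (hL : L = c *: W).

Lemma Lv_eq0 (v : 'cV[C]_p) : L *m v = 0 -> v = 0.
Proof.
move=> h; have := L_unit hc hW hL => hu.
by rewrite -[v]mul1mx -(mulVmx hu) -mulmxA h mulmx0.
Qed.

Lemma col_neq0 (v : 'cV[C]_p) : v != 0 -> exists k, v k 0 != 0.
Proof.
move=> hv; apply/existsP; apply: contraR hv; rewrite negb_exists => /forallP h.
by apply/eqP/matrixP => i j; rewrite ord1 mxE; apply/eqP; move: (h i); rewrite negbK.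
Qed.

Lemma trank_le I J (Sg : tmat C p) : (trank I J Sg <= minn I J)%N.
Proof. by rewrite /trank (leq_trans (count_size _ _)) // size_iota. Qed.

Lemma diag_mono I J (Sg : tmat C p) (hS : forall k, rdiag_sorted (tslice L I J Sg k)) i j :
  (j <= i)%N -> (i < minn I J)%N -> Sg i i != 0 -> Sg j j != 0.
Proof.
move=> hji hi hne.
have hiI : (i < I)%N by move: hi; rewrite leq_min => /andP[].
have hiJ : (i < J)%N by move: hi; rewrite leq_min => /andP[].
have hjI : (j < I)%N := leq_ltn_trans hji hiI.
have hjJ : (j < J)%N := leq_ltn_trans hji hiJ.
have : L *m Sg i i != 0 by apply: contra hne => /eqP /Lv_eq0 ->.
move=> /col_neq0 [k hk].
case: (hS k) => _ hpos hsort.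
have ei : tslice L I J Sg k (Ordinal hiI) (Ordinal hiJ) = (L *m Sg i i) k 0 by rewrite mxE.
have ej : tslice L I J Sg k (Ordinal hjI) (Ordinal hjJ) = (L *m Sg j j) k 0 by rewrite mxE.
have h1 := hsort (Ordinal hjI) (Ordinal hiI) (Ordinal hjJ) (Ordinal hiJ) erefl erefl hji.
have h2 := hpos (Ordinal hiI) (Ordinal hiJ) erefl.
rewrite ei ej in h1 h2.
apply/negP => /eqP hj0.
have z0 : (0 : 'cV[C]_p) k 0 = 0 by rewrite mxE.
move: h1; rewrite hj0 mulmx0 z0 => h1.
by move: hk; rewrite eq_le h1 h2.
Qed.

Lemma trank_prefix I J (Sg : tmat C p) (hS : forall k, rdiag_sorted (tslice L I J Sg k)) i :
  (trank I J Sg <= i)%N -> (i < minn I J)%N -> Sg i i = 0.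
Proof.
move=> hR hi; apply/eqP; apply: contraTT hR => hne; rewrite -ltnNge.
have hall : forall j, (j <= i)%N -> Sg j j != 0 by move=> j hj; exact: (@diag_mono I J Sg hS i j hj hi hne).
rewrite /trank -(subnKC hi) iotaD count_cat.
apply: leq_trans (leq_addr _ _).
have -> : count (fun i0 => Sg i0 i0 != 0) (iota 0 i.+1) = i.+1.
  rewrite -[RHS](size_iota 0 i.+1); apply/eqP; rewrite -all_count; apply/allP => j.
  by rewrite mem_iota add0n ltnS => /andP[_ hj]; exact: hall.
by [].
Qed.

Lemma tnorm_sq (x : tubal C p) : tnorm x ^+ 2 = `|c| ^- 2 * \sum_k `|(L *m x) k 0| ^+ 2.
Proof. by rewrite /tnorm sqrtCK (L_norm hc hW hL). Qed.

Lemma tail_conv I J (Sg : tmat C p) (hS : forall k, rdiag_sorted (tslice L I J Sg k)) r :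
  (r <= trank I J Sg)%N ->
  \sum_(r <= i < trank I J Sg) tnorm (Sg i i) ^+ 2 =
  `|c| ^- 2 * \sum_k \sum_(i : 'I_I | (r <= i)%N) sig (tslice L I J Sg k) i.
Proof.
move=> hr.
rewrite (eq_bigr (fun i => `|c| ^- 2 * \sum_k `|(L *m Sg i i) k 0| ^+ 2)); last first.
  by move=> i _; rewrite tnorm_sq.
rewrite -mulr_sumr exchange_big /=; congr (_ * _); apply: eq_bigr => k _.
pose h i := if (i < J)%N then `|(L *m Sg i i) k 0| ^+ 2 else 0.
have hsig : forall i : 'I_I, sig (tslice L I J Sg k) i = h i.
  move=> i; rewrite /h; case: (ltnP i J) => hiJ.
    by rewrite (sig_single (hS k) (j := Ordinal hiJ)) // mxE.
  by rewrite (sig_out (hS k)).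
rewrite (eq_bigr (fun i : 'I_I => h i)); last by move=> i _; rewrite hsig.
have hRI : (trank I J Sg <= I)%N by exact: leq_trans (trank_le I J Sg) (geq_minl I J).
have hRJ : (trank I J Sg <= J)%N by exact: leq_trans (trank_le I J Sg) (geq_minr I J).
rewrite -(big_geq_mkord r I xpredT h) (big_cat_nat hr hRI) /=.
rewrite [X in _ = _ + X]big_nat_cond [X in _ = _ + X]big1 ?addr0; last first.
  move=> i /andP[/andP[h1 h2] _]; rewrite /h; case: (ltnP i J) => hiJ //.
  rewrite (trank_prefix hS h1) ?mulmx0 ?mxE ?normr0 ?expr0n //.
  by rewrite leq_min h2 hiJ.
rewrite big_nat_cond [RHS]big_nat_cond; apply: eq_bigr => i /andP[/andP[_ h2] _].
by rewrite /h (leq_trans h2 hRJ).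
Qed.

End Bound.
Section Final.
Variables (C : numClosedFieldType) (p : nat) (L W : 'M[C]_p) (c : C).
Hypotheses (hc : c != 0) (hW : W \is unitarymx) (hL : L = c *: W).

Lemma tnormT_sl N d (X : ttensor C p) :
  tnormT N d X = sqrtC (`|c| ^- 2 * \sum_k ssq N d (sl L k X)).
Proof.
rewrite /tnormT /ssq; congr sqrtC.
rewrite (tsum_ext _ _ _ (fun i => L_norm hc hW hL (X i))) tsum_scale tsum_sum.
by [].
Qed.

Lemma sl_sub k (X Y : ttensor C p) : sl L k (fun x => X x - Y x) = (fun i => sl L k X i - sl L k Y i).
Proof. by apply: functional_extensionality => i; rewrite /sl L_sub. Qed.

Lemma mat_Er m r (U : 'M[C]_m) (f : nat -> nat -> C) : (r <= m)%N ->
  (forall (i : 'I_m) (j : nat), (j < r)%N -> forall hj : (j < m)%N, f i j = U i (Ordinal hj)) ->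
  mat m r f = U *m Er C m r.
Proof.
move=> hr hf; apply/matrixP => i j; rewrite !mxE.
have hj : (j < m)%N := leq_trans (ltn_ord j) hr.
rewrite (bigD1 (Ordinal hj)) //= big1 ?addr0.
  by rewrite !mxE /= eqxx mulr1 (hf i j (ltn_ord j) hj).
move=> l /negP hl; rewrite !mxE; case: (boolP ((l : nat) == j)) => [/eqP e|]; last by rewrite mulr0.
by exfalso; apply: hl; apply/eqP/val_inj.
Qed.

Lemma iso_of_Er m r (U : 'M[C]_m) : U \is unitarymx -> (r <= m)%N ->
  mxH (U *m Er C m r) *m (U *m Er C m r) = 1%:M.
Proof.
move=> hU hr; have [_ UU2] := unitary_mxH hU.
by rewrite mxH_mul mulmxA -(mulmxA _ _ U) UU2 mulmx1 Er_iso.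
Qed.

End Final.
Unset Implicit Arguments.
Local Open Scope complex_scope.

Theorem theorem5p5 (R : realType) (p : nat) (L : 'M[R[i]]_p)
  (c : R[i]) (W : 'M[R[i]]_p)
  (hp : (0 < p)%N) (hc : c != 0) (hW : W \is unitarymx) (hL : L = c *: W)
  (N : nat) (d d' : nat -> nat) (A : ttensor R[i] p)
  (Sig : nat -> tmat R[i] p)
  (hSig : forall n, (n < N)%N -> exists U V,
      is_tSVD L (d n) (ncols N d n) (unfold N d n A) U (Sig n) V)
  (hd' : forall n, (n < N)%N -> (1 <= d' n <= trank (d n) (ncols N d n) (Sig n))%N)
  (Uh : nat -> tmat R[i] p)
  (hUh : forall n, (n < N)%N -> exists U S V,
      is_tSVD L (d n) (ncols N (shp d d' n) n) (unfold N (shp d d' n) n (hprod L d A Uh n)) U S V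
      /\ (forall i j, (i < d n)%N -> (j < d' n)%N -> Uh n i j = U i j)) :
  let Shat := hprod L d A Uh N in
  let Ahat := rprod L d' Shat Uh N in
  let bound := sqrtC (\sum_(n < N)
       \sum_(d' n <= k < trank (d n) (ncols N d n) (Sig n)) tnorm (Sig n k k) ^+ 2) in
  tnormT N d (fun x => A x - Ahat x) <= bound /\
  forall (S : ttensor R[i] p) (Wf : nat -> tmat R[i] p),
    (forall n, (n < N)%N -> forall i j, (i < d' n)%N -> (j < d' n)%N ->
       tmul L (d n) (tH L (Wf n)) (Wf n) i j = tid L i j) ->
    bound <= sqrtC (N%:R) * tnormT N d (fun x => A x - rprod L d' S Wf N x).
Proof.
move=> Shat Ahat bound.
pose Sg k n := tslice L (d n) (ncols N d n) (Sig n) k.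
pose tl k n := \sum_(i : 'I_(d n) | (d' n <= i)%N) sig (Sg k n) i.
have Hr : forall n, (n < N)%N -> (d' n <= d n)%N.
  move=> n hn; have /andP[_ h] := hd' n hn.
  by apply: leq_trans h (leq_trans (trank_le _ _ _) (geq_minl _ _)).
have HY : forall k n, (n < N)%N -> exists (U : 'M[R[i]]_(d n)) (V : 'M[R[i]]_(ncols N d n)),
  [/\ U \is unitarymx, V \is unitarymx, rdiag_sorted (Sg k n) &
      unf N d n (d n) (ncols N d n) (sl L k A) = U *m Sg k n *m mxH V].
  move=> k n hn; have [U [V hs]] := hSig n hn; have [h1 h2 h3 h4] := hs k.
  exists (tslice L (d n) (d n) U k), (tslice L (ncols N d n) (ncols N d n) V k).
  by split => //; rewrite -tslice_unf.
have hS : forall n, (n < N)%N -> forall k, rdiag_sorted (tslice L (d n) (ncols N d n) (Sig n) k).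
  by move=> n hn k; have [U [V hs]] := hSig n hn; have [] := hs k.
have ebound : bound = sqrtC (`|c| ^- 2 * \sum_k \sum_(n < N) tl k n).
  rewrite /bound; congr sqrtC.
  rewrite (eq_bigr (fun n : 'I_N => `|c| ^- 2 * \sum_k tl k n)); last first.
    move=> n _; rewrite (tail_conv hc hW hL (hS n (ltn_ord n))) //.
    by have /andP[_ h] := hd' n (ltn_ord n).
  by rewrite -mulr_sumr exchange_big.
have bnd0 : 0 <= `|c| ^- 2 * \sum_k \sum_(n < N) tl k n.
  apply: mulr_ge0; first by rewrite invr_ge0 exprn_ge0.
  apply: sumr_ge0 => k _; apply: sumr_ge0 => n _; apply: sumr_ge0 => i _; exact: sig_ge0.
have cpos : 0 <= `|c| ^- 2 by rewrite invr_ge0 exprn_ge0.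
split.
  rewrite ebound (tnormT_sl hc hW hL) ler_sqrtC ?nnegrE //; last first.
    by apply: mulr_ge0 => //; apply: sumr_ge0 => k _; exact: ssq_ge0.
  apply: ler_wpM2l => //; apply: ler_sum => k _.
  pose uhK := fun m => slm L k (Uh m).
  have HZ : forall n, (n < N)%N -> exists (U : 'M[R[i]]_(d n))
      (S : 'M[R[i]]_(d n, ncols N (shp d d' n) n)) (V : 'M[R[i]]_(ncols N (shp d d' n) n)),
      [/\ U \is unitarymx, V \is unitarymx, rdiag_sorted S,
        unf N (shp d d' n) n (d n) (ncols N (shp d d' n) n) (shpS d (sl L k A) uhK n) = U *m S *m mxH V &
        mat (d n) (d' n) (uhK n) = U *m Er _ (d n) (d' n)].
    move=> n hn; have [U [S [V [hs hU]]]] := hUh n hn; have [h1 h2 h3 h4] := hs k.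
    exists (tslice L (d n) (d n) U k), (tslice L _ _ S k), (tslice L _ _ V k).
    split => //.
      by rewrite -(sl_hprod hc hW hL) -tslice_unf.
    apply: mat_Er; first exact: Hr.
    by move=> i j hj hjd; rewrite mxE /uhK /slm (hU i j (ltn_ord i) hj).
  have hiso : forall n, (n < N)%N -> mxH (mat (d n) (d' n) (uhK n)) *m mat (d n) (d' n) (uhK n) = 1%:M.
    move=> n hn; have [U [S [V [hU _ _ _ ->]]]] := HZ n hn; exact: iso_of_Er hU (Hr n hn).
  have := partA hiso (Sg := fun n => Sg k n) (HY k) HZ Hr.
  rewrite /Ahat /Shat (sl_sub) (sl_rprod hc hW hL) (sl_hprod hc hW hL).
  by move=> h; exact: h.
move=> S Wf hWf.
rewrite ebound (tnormT_sl hc hW hL) -sqrtCM ?nnegrE ?ler0n //; last first.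
  by apply: mulr_ge0 => //; apply: sumr_ge0 => k _; exact: ssq_ge0.
rewrite ler_sqrtC ?nnegrE //; last first.
  apply: mulr_ge0; first exact: ler0n.
  by apply: mulr_ge0 => //; apply: sumr_ge0 => k _; exact: ssq_ge0.
rewrite [X in _ <= X]mulrCA; apply: ler_wpM2l => //; rewrite mulr_sumr; apply: ler_sum => k _.
pose wK := fun m => slm L k (Wf m).
rewrite (sl_sub) (sl_rprod hc hW hL).
apply: le_trans (_ : _ <= \sum_(n < N) ssq N d (fun i => sl L k A i - srpS d' (sl L k S) wK N i)) _.
  apply: ler_sum => n _; have hn := ltn_ord n.
  have [U [V [hU hV hSn hY]]] := HY k n hn.
  apply: (partB _ hn (Hr n hn) hU hV hSn hY).
  apply/matrixP => i j; rewrite !mxE.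
  have := hWf n hn i j (ltn_ord i) (ltn_ord j).
  move/(congr1 (fun v => (L *m v) k 0)); rewrite (L_tid hc hW hL) /tmul (L_sum L) => <-.
  apply: eq_bigr => t _; rewrite (L_tprod hc hW hL) /tH (L_therm hc hW hL) !mxE.
  by rewrite /wK /slm !mxE.
by rewrite big_const_ord iter_addr_0 mulr_natl.
Qed.
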